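(* Let the data be orthogonally separable. Then there exists $\zeta\in(0,1)$ such that for every $k\in[K]$ and every $w\in\mathbb{R}^D\setminus\{0\}$ with $0<|\mathcal I_k^w|<|\mathcal I_k|$, $$\Big\|\sum_{i\in\mathcal I_k^w}x_i\Big\|^2-\big(\mathcal A_k^w\big)^2\ge\mu_sX_{\min}^2\,\zeta.$$
   Context: Data: $x_1,\dots,x_n\in\mathbb{R}^D\setminus\{0\}$ partitioned into classes with index sets $\mathcal I_1,\dots,\mathcal I_K$; $X_{\min}=\min_i\|x_i\|$. Orthogonal separability: there exist $\mu_s\in(0,1]$ and $\mu_d>0$ such that $\langle x_i,x_j\rangle\ge\mu_s\|x_i\|\|x_j\|$ whenever $i,j$ lie in the same class and $\langle x_i,x_j\rangle\le-\mu_d\|x_i\|\|x_j\|$ whenever they lie in different classes. For $w\ne0$: $\mathcal I_k^w=\{i\in\mathcal I_k:\langle x_i,w\rangle>0\}$ and $\mathcal A_k^w=\sum_{i\in\mathcal I_k^w}\langle x_i,w/\|w\|\rangle$. *)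

(* Defs.v *)
From HB Require Import structures.
From mathcomp Require Import all_boot all_order all_algebra.
From mathcomp Require Import reals.
Set Implicit Arguments. Unset Strict Implicit. Unset Printing Implicit Defensive.
Import Order.TTheory GRing.Theory Num.Theory.
Local Open Scope ring_scope.

Definition dotp (R : realType) (D : nat) (u v : 'rV[R]_D) : R :=
  \sum_(j < D) u 0 j * v 0 j.

Definition enorm (R : realType) (D : nat) (v : 'rV[R]_D) : R :=
  Num.sqrt (dotp v v).

(* X_min = min_i ||x_i||  (the inner max only serves as a neutral element;
   for n = 0 the value is 0, which is irrelevant). *)
Definition Xmax (R : realType) (D n : nat) (x : 'I_n -> 'rV[R]_D) : R :=
  \big[Order.max/0]_(i < n) enorm (x i).
Definition Xmin (R : realType) (D n : nat) (x : 'I_n -> 'rV[R]_D) : R :=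
  \big[Order.min/Xmax x]_(i < n) enorm (x i).

Definition Icls (n K : nat) (cls : 'I_n -> 'I_K) (k : 'I_K) : {set 'I_n} :=
  [set i | cls i == k].

Definition Iw (R : realType) (D n K : nat) (x : 'I_n -> 'rV[R]_D)
  (cls : 'I_n -> 'I_K) (k : 'I_K) (w : 'rV[R]_D) : {set 'I_n} :=
  [set i | (cls i == k) && (0 < dotp (x i) w)].

Definition Aw (R : realType) (D n K : nat) (x : 'I_n -> 'rV[R]_D)
  (cls : 'I_n -> 'I_K) (k : 'I_K) (w : 'rV[R]_D) : R :=
  \sum_(i in Iw x cls k w) dotp (x i) ((enorm w)^-1 *: w).

Definition orth_separable (R : realType) (D n K : nat) (x : 'I_n -> 'rV[R]_D)
  (cls : 'I_n -> 'I_K) (mus mud : R) : Prop :=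
  0 < mus /\ mus <= 1 /\ 0 < mud /\
  (forall i j, cls i = cls j -> dotp (x i) (x j) >= mus * enorm (x i) * enorm (x j)) /\
  (forall i j, cls i <> cls j -> dotp (x i) (x j) <= - mud * enorm (x i) * enorm (x j)).

(* Main.v *)
Require Import Defs.
From HB Require Import structures.
From mathcomp Require Import all_boot all_order all_algebra.
From mathcomp Require Import reals.
From mathcomp Require Import ring lra.
Import Order.TTheory GRing.Theory Num.Theory.
Local Open Scope ring_scope.

Set Implicit Arguments. Unset Strict Implicit.
Section Aux.
Variables (R : realType) (D : nat).
Implicit Types u v z : 'rV[R]_D.

Lemma dotpC u v : dotp u v = dotp v u.
Proof. by apply: eq_bigr => j _; rewrite mulrC. Qed.

Lemma dotpDl u v z : dotp (u + v) z = dotp u z + dotp v z.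
Proof. by rewrite /dotp -big_split; apply: eq_bigr => j _; rewrite mxE mulrDl. Qed.

Lemma dotpZl a u z : dotp (a *: u) z = a * dotp u z.
Proof. by rewrite /dotp mulr_sumr; apply: eq_bigr => j _; rewrite mxE mulrA. Qed.

Lemma dotpDr u v z : dotp z (u + v) = dotp z u + dotp z v.
Proof. by rewrite ![dotp z _]dotpC dotpDl. Qed.

Lemma dotpZr a u z : dotp z (a *: u) = a * dotp z u.
Proof. by rewrite ![dotp z _]dotpC dotpZl. Qed.

Lemma dotp0l z : dotp 0 z = 0.
Proof. by rewrite /dotp big1 // => j _; rewrite mxE mul0r. Qed.

Lemma dotp_suml (I : finType) (A : {set I}) (f : I -> 'rV[R]_D) z :
  dotp (\sum_(i in A) f i) z = \sum_(i in A) dotp (f i) z.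
Proof. apply: (big_morph (fun v => dotp v z)); [by move=> ? ?; rewrite dotpDl| exact: dotp0l]. Qed.

Lemma dotp_ge0 u : 0 <= dotp u u.
Proof. by apply: sumr_ge0 => j _; rewrite -expr2 sqr_ge0. Qed.


Lemma dotp_gt0 u : u != 0 -> 0 < dotp u u.
Proof.
move=> nz; rewrite lt_def dotp_ge0 andbT; apply/negP => /eqP H.
have H2 : forall j, u 0 j * u 0 j = 0.
  move=> j; apply: (psumr_eq0P _ H) => // k _; by rewrite -expr2 sqr_ge0.
move/eqP: nz; apply; apply/matrixP => i j; rewrite mxE ord1.
by have /eqP := H2 j; rewrite mulf_eq0 orbb => /eqP.
Qed.

Lemma enorm_ge0 u : 0 <= enorm u.
Proof. exact: sqrtr_ge0. Qed.

Lemma enorm_sq u : enorm u ^+ 2 = dotp u u.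
Proof. by rewrite /enorm sqr_sqrtr // dotp_ge0. Qed.

Lemma dotp_expand a b c u v z :
  dotp (a *: u + b *: v + c *: z) (a *: u + b *: v + c *: z) =
  a^+2 * dotp u u + b^+2 * dotp v v + c^+2 * dotp z z
  + 2 * a * b * dotp u v + 2 * a * c * dotp u z + 2 * b * c * dotp v z.
Proof.
rewrite !dotpDl !dotpDr !dotpZl !dotpZr.
rewrite [dotp v u]dotpC [dotp z u]dotpC [dotp z v]dotpC.
ring.
Qed.

End Aux.
Unset Implicit Arguments.

Theorem mainTheorem11 (R : realType) (D n K : nat) (x : 'I_n -> 'rV[R]_D)
  (cls : 'I_n -> 'I_K) (mus mud : R) :
  (forall i, x i != 0) ->
  orth_separable x cls mus mud ->
  exists zeta : R, 0 < zeta /\ zeta < 1 /\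
    forall (k : 'I_K) (w : 'rV[R]_D), w != 0 ->
      (0 < #|Iw x cls k w|)%N -> (#|Iw x cls k w| < #|Icls cls k|)%N ->
      enorm (\sum_(i in Iw x cls k w) x i) ^+ 2 - (Aw x cls k w) ^+ 2
        >= mus * (Xmin x) ^+ 2 * zeta.
Proof.
move=> xnz [mus0 [mus1 [mud0 [Hs Hd]]]].
exists (mus / 2); split; first by lra.
split; first by lra.
move=> k w wnz cardpos cardlt.
set S := Iw x cls k w.
set s := \sum_(i in S) x i.
have Xmax0 : 0 <= Xmax x.
  rewrite /Xmax; apply: (big_ind (fun v => 0 <= v)) => //.
    by move=> a b ha hb; rewrite le_max ha.
  by move=> i _; rewrite enorm_ge0.
have Xmin0 : 0 <= Xmin x.
  rewrite /Xmin; apply: (big_ind (fun v => 0 <= v)) => //.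
    by move=> a b ha hb; rewrite le_min ha hb.
  by move=> i _; rewrite enorm_ge0.
have [i0 i0S] : exists i0, i0 \in S by apply/card_gt0P.
have i0k : cls i0 = k by move: i0S; rewrite inE => /andP [/eqP].
have [j jk jS] : exists2 j, j \in Icls cls k & j \notin S.
  apply/subsetPn; apply/negP => sub.
  by move: (subset_leq_card sub); rewrite leqNgt cardlt.
have jk' : cls j = k by move: jk; rewrite inE => /eqP.
have bneg : dotp (x j) w <= 0.
  by move: jS; rewrite inE jk' eqxx /= -leNgt.
set W := dotp w w. set X := dotp (x j) (x j).
set Ss := dotp s s. set a := dotp s w. set b := dotp (x j) w.
set c := dotp s (x j).
have W0 : 0 < W by apply: dotp_gt0.
have X0 : 0 < X by apply: dotp_gt0.
have a0 : 0 <= a.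
  rewrite /a dotp_suml; apply: sumr_ge0 => i; rewrite inE => /andP [_ h].
  exact: ltW.
have nj : enorm (x j) ^+ 2 = X by rewrite enorm_sq.
have nj0 : 0 <= enorm (x j) by rewrite enorm_ge0.
have ni0 : Xmin x <= enorm (x i0) by rewrite /Xmin bigmin_le.
have cge : mus * Xmin x * enorm (x j) <= c.
  rewrite /c dotp_suml (bigD1 i0) //=.
  have h1 := Hs i0 j (etrans i0k (esym jk')).
  have h2 : 0 <= \sum_(i in S | i != i0) dotp (x i) (x j).
    apply: sumr_ge0 => i /andP [iS _].
    have ik : cls i = k by move: iS; rewrite inE => /andP [/eqP].
    apply: le_trans (Hs i j (etrans ik (esym jk'))).
    by apply: mulr_ge0; [apply: mulr_ge0; [exact: ltW|exact: enorm_ge0]|exact: enorm_ge0].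
  have h3 : mus * Xmin x * enorm (x j) <= mus * enorm (x i0) * enorm (x j).
    by apply: ler_wpM2r => //; apply: ler_wpM2l => //; exact: ltW.
  lra.
have q := dotp_ge0 ((W * X) *: s + (- a * X) *: w + (- (c * W - a * b)) *: x j).
rewrite dotp_expand -/Ss -/W -/X -/a -/c in q.
rewrite [dotp w (x j)]dotpC -/b in q.
have key : W * X * (W * Ss - a ^+ 2) >= (c * W - a * b) ^+ 2 by nra.
have c0 : 0 <= c by apply: le_trans cge; rewrite !mulr_ge0 // ltW.
have ab : a * b <= 0 by apply: mulr_ge0_le0.
have cW0 : 0 <= c * W by rewrite mulr_ge0 // ltW.
have key2 : (c * W) ^+ 2 <= (c * W - a * b) ^+ 2 by nra.
have csq : (mus * Xmin x) ^+ 2 * X <= c ^+ 2.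
  rewrite -nj -exprMn.
  have y0 : 0 <= mus * Xmin x * enorm (x j).
    by apply: mulr_ge0 => //; apply: mulr_ge0 => //; exact: ltW.
  nra.
have key3 : W * Ss - a ^+ 2 >= (mus * Xmin x) ^+ 2 * W.
  have h0 : (mus * Xmin x) ^+ 2 * X * W ^+ 2 <= c ^+ 2 * W ^+ 2.
    by apply: ler_wpM2r => //; exact: sqr_ge0.
  have h : W * X * ((mus * Xmin x) ^+ 2 * W) <= W * X * (W * Ss - a ^+ 2).
    have -> : W * X * ((mus * Xmin x) ^+ 2 * W) = (mus * Xmin x) ^+ 2 * X * W ^+ 2 by ring.
    apply: le_trans h0 _; rewrite -exprMn; exact: le_trans key2 key.
  by rewrite ler_pM2l ?mulr_gt0 in h.
have eA : Aw x cls k w = a / enorm w.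
  rewrite /Aw (eq_bigr (fun i => (enorm w)^-1 * dotp (x i) w)); last first.
    by move=> i _; rewrite dotpZr.
  by rewrite -mulr_sumr -dotp_suml mulrC.
rewrite eA enorm_sq -/Ss expr_div_n enorm_sq -/W.
have -> : Ss - a ^+ 2 / W = (W * Ss - a ^+ 2) / W by field; lra.
rewrite ler_pdivlMr //.
have : 0 <= Xmin x ^+ 2 by rewrite sqr_ge0.
move=> t0; apply: le_trans key3.
have p : 0 <= mus ^+ 2 * Xmin x ^+ 2 * W.
  by apply: mulr_ge0; [apply: mulr_ge0; [exact: sqr_ge0|exact: t0]|exact: ltW].
set P := mus ^+ 2 * Xmin x ^+ 2 * W.
have -> : mus * Xmin x ^+ 2 * (mus / 2) * W = P / 2 by rewrite /P; ring.
have -> : (mus * Xmin x) ^+ 2 * W = P by rewrite /P; ring.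
move: p; rewrite -/P; clear; lra.
Qed.
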